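(* An equation t₁ ≈ (t₂→1)→1 holds in all strong quasi-Wajsberg* algebras iff it holds in all Wajsberg* algebras.
   Context: Here t₁, t₂ are terms in the language ⟨→, ¬, 1⟩. A quasi-Wajsberg* algebra is an algebra ⟨W; →, ¬, ⁺, ⁻, 1⟩ of type ⟨2,1,1,1,0⟩ satisfying: x→y = ¬y→¬x; (x→1)→((y→1)→z) = (y→1)→((x→1)→z); (1→x)→1 = 1; (z→z)→(x→y) = x→y; (1→1)→x⁺ = ((1→1)→x)⁺ = (x→1)→1 and (1→1)→x⁻ = ((1→1)→x)⁻ = (x→¬1)→¬1; x→y = (y⁺→x⁻)→(x⁺→y⁻); ¬(x→y) = y→x; ¬¬x = x; (x→(¬x→y))⁺ = x⁺→(¬x⁺→y⁺); x∨y = y∨x; x∨(y∨z) = (x∨y)∨z; x→(y∨z) = (x→y)∨(x→z); where x∨y = ((x⁺→y⁺)⁺→(¬x)⁻)→((y⁻→x⁻)⁻→x⁻). A strong quasi-Wajsberg* algebra is a quasi-Wajsberg* algebra satisfying x⁺ = (1→1)→x⁺ and x⁻ = (1→1)→x⁻. A Wajsberg* algebra is an algebra ⟨M; →, ¬, 1⟩ satisfying the analogous axioms with (y→y)→x = x, where x⁺ = (x→1)→1, x⁻ = (x→¬1)→¬1; every Wajsberg* algebra is a strong quasi-Wajsberg* algebra. A term is regular if it contains → or 1; otherwise it has the form ¬ⁿp for a variable p. For regular terms t₁, t₂, the equation t₁ ≈ t₂ holds in all strong quasi-Wajsberg* algebras iff it holds in all Wajsberg* algebras. *)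

(* Defs.v *)
Inductive term : Type :=
  | Var : nat -> term
  | Imp : term -> term -> term
  | Neg : term -> term
  | One : term.

Section Laws.
Variables (T : Type) (imp : T -> T -> T) (neg : T -> T)
          (plus minus : T -> T) (one : T).

Definition join (x y : T) : T :=
  imp (imp (plus (imp (plus x) (plus y))) (minus (neg x)))
      (imp (minus (imp (minus y) (minus x))) (minus x)).

Definition qw_axioms : Prop :=
  (forall x y, imp x y = imp (neg y) (neg x)) /\
  (forall x y z, imp (imp x one) (imp (imp y one) z)
                 = imp (imp y one) (imp (imp x one) z)) /\
  (forall x, imp (imp one x) one = one) /\
  (forall x y z, imp (imp z z) (imp x y) = imp x y) /\
  (forall x, imp (imp one one) (plus x) = plus (imp (imp one one) x) /\
             plus (imp (imp one one) x) = imp (imp x one) one) /\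
  (forall x, imp (imp one one) (minus x) = minus (imp (imp one one) x) /\
             minus (imp (imp one one) x) = imp (imp x (neg one)) (neg one)) /\
  (forall x y, imp x y = imp (imp (plus y) (minus x)) (imp (plus x) (minus y))) /\
  (forall x y, neg (imp x y) = imp y x) /\
  (forall x, neg (neg x) = x) /\
  (forall x y, plus (imp x (imp (neg x) y))
               = imp (plus x) (imp (neg (plus x)) (plus y))) /\
  (forall x y, join x y = join y x) /\
  (forall x y z, join x (join y z) = join (join x y) z) /\
  (forall x y z, imp x (join y z) = join (imp x y) (imp x z)).

Definition sqw_axioms : Prop :=
  qw_axioms /\
  (forall x, plus x = imp (imp one one) (plus x)) /\
  (forall x, minus x = imp (imp one one) (minus x)).
End Laws.

Record SQWAlg : Type := {
  sq_car :> Type;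
  sq_imp : sq_car -> sq_car -> sq_car;
  sq_neg : sq_car -> sq_car;
  sq_plus : sq_car -> sq_car;
  sq_minus : sq_car -> sq_car;
  sq_one : sq_car;
  sq_ax : sqw_axioms sq_car sq_imp sq_neg sq_plus sq_minus sq_one }.

Definition w_plus {T} (imp : T -> T -> T) (one : T) (x : T) : T :=
  imp (imp x one) one.
Definition w_minus {T} (imp : T -> T -> T) (neg : T -> T) (one : T) (x : T) : T :=
  imp (imp x (neg one)) (neg one).

Definition w_axioms (T : Type) (imp : T -> T -> T) (neg : T -> T) (one : T) : Prop :=
  qw_axioms T imp neg (w_plus imp one) (w_minus imp neg one) one /\
  (forall x y, imp (imp y y) x = x).

Record WAlg : Type := {
  w_car :> Type;
  w_imp : w_car -> w_car -> w_car;
  w_neg : w_car -> w_car;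
  w_one : w_car;
  w_ax : w_axioms w_car w_imp w_neg w_one }.

Fixpoint eval {T : Type} (imp : T -> T -> T) (neg : T -> T) (one : T)
    (v : nat -> T) (t : term) : T :=
  match t with
  | Var n => v n
  | Imp a b => imp (eval imp neg one v a) (eval imp neg one v b)
  | Neg a => neg (eval imp neg one v a)
  | One => one
  end.

Definition holds_SQW (t1 t2 : term) : Prop :=
  forall (A : SQWAlg) (v : nat -> A),
    eval (sq_imp A) (sq_neg A) (sq_one A) v t1
    = eval (sq_imp A) (sq_neg A) (sq_one A) v t2.

Definition holds_W (t1 t2 : term) : Prop :=
  forall (M : WAlg) (v : nat -> M),
    eval (w_imp M) (w_neg M) (w_one M) v t1
    = eval (w_imp M) (w_neg M) (w_one M) v t2.

(* Main.v *)
Require Import Defs.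
From Stdlib Require Import ProofIrrelevance FunctionalExtensionality.

Inductive t3 := N1 | Z0 | P1.
Definition imp3 (x y : t3) : t3 :=
  match x, y with
  | N1, N1 => Z0 | N1, _ => P1
  | Z0, y => y
  | P1, N1 => N1 | P1, Z0 => N1 | P1, P1 => Z0
  end.
Definition neg3 (x : t3) : t3 := match x with N1 => P1 | Z0 => Z0 | P1 => N1 end.
Definition imp9 (x y : t3 * t3) : t3 * t3 :=
  (imp3 (fst x) (fst y), imp3 (snd x) (snd y)).
Definition neg9 (x : t3 * t3) : t3 * t3 := (neg3 (fst x), neg3 (snd x)).
Definition one9 : t3 * t3 := (P1, P1).

Lemma w9 : w_axioms (t3 * t3) imp9 neg9 one9.
Proof.
  split; [|intros [[] []] [[] []]; reflexivity].
  repeat split;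
  first [ intros [[] []] [[] []] [[] []]; reflexivity
        | intros [[] []] [[] []]; reflexivity
        | intros [[] []]; reflexivity ].
Qed.
Definition W9 : WAlg := {| w_car := t3 * t3; w_imp := imp9; w_neg := neg9; w_one := one9; w_ax := w9 |}.

Fixpoint regb (t : term) : bool :=
  match t with Var _ => false | Imp _ _ => true | Neg a => regb a | One => true end.

Lemma nonreg t : regb t = false -> exists n p, t = Nat.iter n Neg (Var p).
Proof.
  induction t; simpl; intros H; try discriminate.
  - exists 0, n; reflexivity.
  - destruct (IHt H) as [n [p ->]]. exists (S n), p; reflexivity.
Qed.

Lemma eval_iter {T} (imp : T -> T -> T) neg one v n p :
  eval imp neg one v (Nat.iter n Neg (Var p)) = Nat.iter n neg (v p).
Proof. induction n; simpl; [reflexivity| now rewrite IHn]. Qed.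

Section Sub.
Variable A : SQWAlg.
Let imp := sq_imp A. Let neg := sq_neg A. Let one := sq_one A.
Let plus := sq_plus A. Let minus := sq_minus A.
Let e := imp one one.

Lemma plusE x : plus x = w_plus imp one x.
Proof.
  destruct (sq_ax A) as [Q [S1 S2]].
  destruct Q as (a1 & a2 & a3 & a4 & a5 & a6 & _).
  unfold plus, w_plus. rewrite S1. destruct (a5 x) as [-> ->]. reflexivity.
Qed.
Lemma minusE x : minus x = w_minus imp neg one x.
Proof.
  destruct (sq_ax A) as [Q [S1 S2]].
  destruct Q as (a1 & a2 & a3 & a4 & a5 & a6 & _).
  unfold minus, w_minus. rewrite S2. destruct (a6 x) as [-> ->]. reflexivity.
Qed.

Lemma qwA : qw_axioms A imp neg (w_plus imp one) (w_minus imp neg one) one.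
Proof.
  destruct (sq_ax A) as [Q _].
  assert (E1 : plus = w_plus imp one) by (apply functional_extensionality; exact plusE).
  assert (E2 : minus = w_minus imp neg one) by (apply functional_extensionality; exact minusE).
  unfold plus, minus, imp, neg, one in *. rewrite <- E1, <- E2. exact Q.
Qed.

Lemma cl_imp x y : imp e (imp x y) = imp x y.
Proof. destruct qwA as (a1 & a2 & a3 & a4 & _). apply a4. Qed.
Lemma cl_one : imp e one = one.
Proof. destruct qwA as (a1 & a2 & a3 & _). apply a3. Qed.
Lemma hom_neg x : imp e (neg x) = neg (imp e x).
Proof.
  destruct qwA as (a1 & a2 & a3 & a4 & a5 & a6 & a7 & a8 & _).
  rewrite a8, (a1 x e). unfold e. rewrite a8. reflexivity.
Qed.
Lemma hom_imp x y : imp x y = imp (imp e x) (imp e y).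
Proof.
  destruct qwA as (a1 & a2 & a3 & a4 & a5 & a6 & a7 & _).
  rewrite (a7 x y), (a7 (imp e x) (imp e y)).
  destruct (a5 x) as [Hx1 Hx2]. destruct (a5 y) as [Hy1 Hy2].
  destruct (a6 x) as [Mx1 Mx2]. destruct (a6 y) as [My1 My2].
  fold e in Hx1, Hy1, Mx1, My1. rewrite <- Hx1, <- Hy1, <- Mx1, <- My1.
  unfold w_plus, w_minus. rewrite !cl_imp. reflexivity.
Qed.

Lemma eval_e v t : imp e (eval imp neg one v t) = eval imp neg one (fun n => imp e (v n)) t.
Proof.
  induction t; simpl.
  - reflexivity.
  - rewrite cl_imp, hom_imp, IHt1, IHt2. reflexivity.
  - rewrite hom_neg, IHt. reflexivity.
  - apply cl_one.
Qed.

Lemma eval_reg v t : regb t = true -> imp e (eval imp neg one v t) = eval imp neg one v t.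
Proof.
  induction t; simpl; intros H; try discriminate.
  - apply cl_imp.
  - rewrite hom_neg, IHt; auto.
  - apply cl_one.
Qed.

Definition Sc := { x : sq_car A | imp e x = x }.
Definition simp (x y : Sc) : Sc := exist _ (imp (proj1_sig x) (proj1_sig y)) (cl_imp _ _).
Lemma cl_neg x : imp e x = x -> imp e (neg x) = neg x.
Proof. intros H. rewrite hom_neg, H. reflexivity. Qed.
Definition sneg (x : Sc) : Sc := exist _ (neg (proj1_sig x)) (cl_neg _ (proj2_sig x)).
Definition sone : Sc := exist _ one cl_one.

Lemma sig_eq (x y : Sc) : proj1_sig x = proj1_sig y -> x = y.
Proof.
  destruct x as [x px], y as [y py]; simpl; intros ->. f_equal. apply proof_irrelevance.
Qed.

Lemma v_imp x y : proj1_sig (simp x y) = imp (proj1_sig x) (proj1_sig y).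
Proof. reflexivity. Qed.
Lemma v_neg x : proj1_sig (sneg x) = neg (proj1_sig x).
Proof. reflexivity. Qed.
Lemma v_one : proj1_sig sone = one.
Proof. reflexivity. Qed.
Lemma v_wp x : proj1_sig (w_plus simp sone x) = w_plus imp one (proj1_sig x).
Proof. reflexivity. Qed.
Lemma v_wm x : proj1_sig (w_minus simp sneg sone x) = w_minus imp neg one (proj1_sig x).
Proof. reflexivity. Qed.
Lemma v_join x y : proj1_sig (join Sc simp sneg (w_plus simp sone) (w_minus simp sneg sone) x y)
  = join A imp neg (w_plus imp one) (w_minus imp neg one) (proj1_sig x) (proj1_sig y).
Proof. reflexivity. Qed.

Ltac vsimp := repeat (rewrite ?v_join; rewrite ?v_wp, ?v_wm; rewrite ?v_imp, ?v_neg, ?v_one).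

Lemma wS : w_axioms Sc simp sneg sone.
Proof.
  destruct qwA as (a1 & a2 & a3 & a4 & a5 & a6 & a7 & a8 & a9 & a10 & a11 & a12 & a13).
  split.
  - repeat split; intros; apply sig_eq; vsimp; auto;
      try apply a5; try apply a6.
  - intros x y. apply sig_eq. vsimp. destruct x as [x px]; simpl.
    pose proof (a4 e x (proj1_sig y)) as H. rewrite px in H. exact H.
Qed.

Definition WS : WAlg := {| w_car := Sc; w_imp := simp; w_neg := sneg; w_one := sone; w_ax := wS |}.

Lemma v_eval w t : proj1_sig (eval simp sneg sone w t) = eval imp neg one (fun n => proj1_sig (w n)) t.
Proof.
  induction t; simpl; try rewrite IHt1, IHt2; try rewrite IHt; reflexivity.
Qed.

Definition proj (x : sq_car A) : Sc := exist _ (imp e x) (cl_imp _ _).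
End Sub.

Lemma sqw_of_w (M : WAlg) : sqw_axioms M (w_imp M) (w_neg M) (w_plus (w_imp M) (w_one M))
  (w_minus (w_imp M) (w_neg M) (w_one M)) (w_one M).
Proof.
  destruct (w_ax M) as [Q H]. split; [exact Q|]. split; intros x; symmetry; apply H.
Qed.

Definition SQ_of_W (M : WAlg) : SQWAlg :=
  {| sq_car := M; sq_imp := w_imp M; sq_neg := w_neg M;
     sq_plus := w_plus (w_imp M) (w_one M); sq_minus := w_minus (w_imp M) (w_neg M) (w_one M);
     sq_one := w_one M; sq_ax := sqw_of_w M |}.

Lemma iter_neg9 n : Nat.iter n neg9 (P1, N1) = (P1, N1) \/ Nat.iter n neg9 (P1, N1) = (N1, P1).
Proof.
  induction n; simpl; [left; reflexivity|].
  destruct IHn as [-> | ->]; [right|left]; reflexivity.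
Qed.

Theorem corollary3p3 (t1 t2 : term) :
  holds_SQW t1 (Imp (Imp t2 One) One) <-> holds_W t1 (Imp (Imp t2 One) One).
Proof.
  split.
  - intros H M v. exact (H (SQ_of_W M) v).
  - intros H A v.
    destruct (regb t1) eqn:R.
    + pose (w := fun n => proj A (v n)).
      pose proof (f_equal (@proj1_sig _ _) (H (WS A) w)) as E.
      simpl in E. rewrite !v_eval in E. simpl in E.
      rewrite <- (eval_reg A v t1 R).
      rewrite (eval_e A v t1). rewrite E.
      exact (eq_trans (eq_sym (eval_e A v (Imp (Imp t2 One) One))) (eval_reg A v (Imp (Imp t2 One) One) eq_refl)).
    + exfalso. destruct (nonreg t1 R) as [n [p ->]].
      pose proof (H W9 (fun _ => (P1, N1))) as E.
      simpl in E. rewrite eval_iter in E.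
      destruct (eval imp9 neg9 one9 (fun _ => (P1, N1)) t2) as [[] []];
      destruct (iter_neg9 n) as [F|F]; rewrite F in E; discriminate E.
Qed.
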